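(* For every $n$ and every $k\in[1,\lfloor\frac{n-1}{2}\rfloor]$ there exist Latin squares of order $n$ with inner distance $k$. Moreover, for any Latin square $L$ of order $n$ with inner distance $k$, $L$ is isotopic to Latin squares of every inner distance less than $k$, and these can be obtained from $L$ by symbol permutation alone.
   Context: A Latin square of order $n$ is an $n\times n$ matrix with entries from the symbol set $[1,n]=\{1,\dots,n\}$ in which every row and every column contains each symbol exactly once. The distance between symbols $a,b\in[1,n]$ is $\mathrm{dist}(a,b)=\min\{(a-b)\bmod n,\ (b-a)\bmod n\}$, with remainders taken in $[0,n-1]$. Two cells are adjacent if they share an edge horizontally or vertically. The inner distance of a Latin square is the minimum of $\mathrm{dist}$ over all pairs of symbols in adjacent cells. The maximum inner distance of a Latin square of order $n$ is $\lfloor\frac{n-1}{2}\rfloor$. A symbol permutation of a Latin square $L$ by a bijection $\sigma$ of $[1,n]$ is the Latin square whose $(i,j)$ entry is $\sigma(m_{i,j})$, where $m_{i,j}$ is the $(i,j)$ entry of $L$. Two Latin squares are isotopic if they differ by some combination of symbol permutation, row permutations, and column permutations. (Proof idea: repeatedly apply transpositions of symbols $(n,1)$ after a cyclic shift of symbols, each of which lowers the inner distance by exactly 1.) *)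

(* Defs.v *)
(* Symbols are 'I_n = {0,..,n-1} (the paper's symbol s in [1,n]
   corresponds to s-1; the cyclic distance is shift-invariant). *)
From mathcomp Require Import all_boot all_algebra all_fingroup.
Set Implicit Arguments. Unset Strict Implicit. Unset Printing Implicit Defensive.

Definition latin_square (n : nat) (L : 'M['I_n]_n) : Prop :=
  (forall i : 'I_n, injective (fun j : 'I_n => L i j)) /\
  (forall j : 'I_n, injective (fun i : 'I_n => L i j)).

Definition sdist (n : nat) (a b : 'I_n) : nat :=
  minn ((a + n - b) %% n) ((b + n - a) %% n).

Definition adjacent (n : nat) (i j i' j' : 'I_n) : bool :=
  ((i == i') && ((j.+1 == j' :> nat) || (j'.+1 == j :> nat))) ||
  ((j == j') && ((i.+1 == i' :> nat) || (i'.+1 == i :> nat))).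

Definition has_inner_distance (n : nat) (L : 'M['I_n]_n) (k : nat) : Prop :=
  (forall i j i' j' : 'I_n, adjacent i j i' j' -> k <= sdist (L i j) (L i' j')) /\
  (exists i j i' j' : 'I_n, adjacent i j i' j' /\ sdist (L i j) (L i' j') = k).

Definition sym_perm (n : nat) (s : {perm 'I_n}) (L : 'M['I_n]_n) : 'M['I_n]_n :=
  \matrix_(i, j) s (L i j).

Definition isotopic (n : nat) (L M : 'M['I_n]_n) : Prop :=
  exists (s r c : {perm 'I_n}), forall i j : 'I_n, M i j = s (L (r i) (c j)).

(* Main.v *)
Require Import Defs.
From mathcomp Require Import all_boot all_algebra all_fingroup.
From mathcomp Require Import zify.

Definition cd (n u v : nat) := minn (u - v + (v - u)) (n - (u - v + (v - u))).

Lemma modn_cases x n : x < n + n -> (x < n /\ x %% n = x) \/ (n <= x /\ x %% n = x - n).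
Proof.
move=> H; case: (ltnP x n) => Hx; first by left; rewrite modn_small.
right; split=> //.
have -> : x = (x - n) + n by lia.
by rewrite modnDr modn_small; lia.
Qed.

Lemma sdistE n (a b : 'I_n) : sdist a b = cd n a b.
Proof.
rewrite /sdist /cd.
have Ha := ltn_ord a; have Hb := ltn_ord b.
have [[H1 ->]|[H1 ->]] := modn_cases (a + n - b) n ltac:(lia);
have [[H2 ->]|[H2 ->]] := modn_cases (b + n - a) n ltac:(lia); lia.
Qed.

Lemma ordS_val n (p : 'I_n) :
  (p.+1 < n /\ (ordS p : nat) = p.+1) \/ (p.+1 = n /\ (ordS p : nat) = 0).
Proof.
have Hp := ltn_ord p.
case: (ltnP p.+1 n) => H.
  by left; split=> //=; rewrite modn_small.
by right; split; [lia| rewrite /= (_ : p.+1 = n) ?modnn //; lia].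
Qed.

Lemma sym_perm_latin n (s : {perm 'I_n}) L : latin_square L -> latin_square (sym_perm s L).
Proof.
move=> [Hr Hc]; split.
  by move=> i j1 j2; rewrite !mxE => /perm_inj; apply: Hr.
by move=> j i1 i2; rewrite !mxE => /perm_inj; apply: Hc.
Qed.

Lemma sym_perm_iso n (s : {perm 'I_n}) L : isotopic L (sym_perm s L).
Proof. by exists s, 1%g, 1%g => i j; rewrite mxE !perm1. Qed.

Lemma sym_perm1 n (L : 'M['I_n]_n) : sym_perm 1%g L = L.
Proof. by apply/matrixP => i j; rewrite mxE perm1. Qed.

Lemma sym_permM n (s t : {perm 'I_n}) L : sym_perm t (sym_perm s L) = sym_perm (s * t)%g L.
Proof. by apply/matrixP => i j; rewrite !mxE permM. Qed.

Lemma tau_bound n (p x y : 'I_n) k : 2 <= k -> k <= cd n x y ->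
  k.-1 <= cd n (tperm p (ordS p) x) (tperm p (ordS p) y).
Proof.
move=> Hk Hxy.
have H1 := ordS_val _ p; have H2 := ltn_ord p; have H3 := ltn_ord x; have H4 := ltn_ord y.
case: tpermP => Hx; case: tpermP => Hy; subst; rewrite /cd in Hxy *; lia.
Qed.

Lemma step_core n (p q : 'I_n) k : 2 <= k -> cd n p q = k -> (p + k = q \/ p + k = q + n) ->
  cd n (tperm p (ordS p) p) (tperm p (ordS p) q) = k.-1.
Proof.
move=> Hk Hpq Hc; rewrite tpermL.
have H1 := ordS_val _ p; have H2 := ltn_ord p; have H3 := ltn_ord q.
case: tpermP => Hq; try subst q; rewrite /cd in Hpq *; lia.
Qed.

Lemma cdC n u v : cd n u v = cd n v u.
Proof. rewrite /cd; lia. Qed.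

Lemma step n (L : 'M['I_n]_n) k : has_inner_distance L k -> 2 <= k ->
  exists s, has_inner_distance (sym_perm s L) k.-1.
Proof.
move=> [Hall [i [j [i' [j' [Hadj Hk]]]]]] H2.
rewrite sdistE in Hk.
have Ha := ltn_ord (L i j); have Hb := ltn_ord (L i' j').
have [p [q [Hpq [Hc Hcase]]]] : exists p q : 'I_n,
   ((p == L i j) && (q == L i' j') || (p == L i' j') && (q == L i j)) /\
   cd n p q = k /\ (p + k = q \/ p + k = q + n).
  rewrite /cd in Hk.
  case: (ltnP (L i j) (L i' j')) => Hab.
    case: (L i' j' - L i j =P k) => E.
      by exists (L i j), (L i' j'); rewrite !eqxx /cd; split => //; lia.
    by exists (L i' j'), (L i j); rewrite !eqxx orbT /cd; split => //; lia.
  case: (L i j - L i' j' =P k) => E.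
    by exists (L i' j'), (L i j); rewrite !eqxx orbT /cd; split => //; lia.
  by exists (L i j), (L i' j'); rewrite !eqxx /cd; split => //; lia.
exists (tperm p (ordS p)); split.
  move=> i1 j1 i2 j2 H; rewrite !mxE sdistE; apply: tau_bound => //.
  by rewrite -sdistE; exact: Hall.
have E := @step_core _ _ _ _ H2 Hc Hcase.
case/orP: Hpq => /andP [/eqP Ep /eqP Eq].
  exists i, j, i', j'; split => //; rewrite !mxE sdistE -Ep -Eq; exact: E.
exists i, j, i', j'; split => //; rewrite !mxE sdistE -Ep -Eq cdC; exact: E.
Qed.

Lemma iter_step n (L : 'M['I_n]_n) k d : has_inner_distance L k -> d < k ->
  exists s, has_inner_distance (sym_perm s L) (k - d).
Proof.
move=> HL; elim: d => [|d IH] Hd.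
  by exists 1%g; rewrite sym_perm1 subn0.
have [s Hs] := IH (ltnW Hd).
have [t Ht] := @step _ _ _ Hs ltac:(lia).
exists (s * t)%g; rewrite -sym_permM.
by have -> : k - d.+1 = (k - d).-1 by lia.
Qed.

Lemma part2 n (L : 'M['I_n]_n) (k : nat) : latin_square L -> has_inner_distance L k ->
     forall j : nat, 1 <= j < k ->
       exists s : {perm 'I_n},
         latin_square (sym_perm s L) /\ isotopic L (sym_perm s L) /\
         has_inner_distance (sym_perm s L) j.
Proof.
move=> HL Hk j Hj.
have [s Hs] := @iter_step _ _ _ (k - j) Hk ltac:(lia).
exists s; split; first exact: sym_perm_latin.
split; first exact: sym_perm_iso.
by have <- : k - (k - j) = j by lia.
Qed.

Definition g (n j : nat) := if j %% 2 == 0 then j %/ 2 else j %/ 2 + (n.+1) %/ 2.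

Lemma g_lt n j : j < n -> g n j < n.
Proof. by rewrite /g; case: ifP => /eqP; lia. Qed.

Lemma g_inj n j1 j2 : j1 < n -> j2 < n -> g n j1 = g n j2 -> j1 = j2.
Proof. by rewrite /g; case: ifP => /eqP; case: ifP => /eqP; lia. Qed.

Lemma g_step n j : j.+1 < n -> (n.-1)./2 <= cd n (g n j) (g n j.+1).
Proof. by rewrite /g /cd; case: ifP => /eqP; case: ifP => /eqP; lia. Qed.

Lemma g_12 n : 2 < n -> cd n (g n 1) (g n 2) = (n.-1)./2.
Proof. rewrite /g /cd /=; lia. Qed.

Lemma shiftl n G x y : G < n -> x < n -> y < n -> cd n ((G + x) %% n) ((G + y) %% n) = cd n x y.
Proof.
move=> HG Hx Hy.
have [[H1 ->]|[H1 ->]] := modn_cases (G + x) n ltac:(lia);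
have [[H2 ->]|[H2 ->]] := modn_cases (G + y) n ltac:(lia); rewrite /cd; lia.
Qed.

Lemma shiftr n G x y : G < n -> x < n -> y < n -> cd n ((x + G) %% n) ((y + G) %% n) = cd n x y.
Proof. by move=> *; rewrite ![_ + G]addnC shiftl. Qed.

Lemma modn_inj n G x y : G < n -> x < n -> y < n -> (G + x) %% n = (G + y) %% n -> x = y.
Proof.
move=> HG Hx Hy.
have [[H1 ->]|[H1 ->]] := modn_cases (G + x) n ltac:(lia);
have [[H2 ->]|[H2 ->]] := modn_cases (G + y) n ltac:(lia); lia.
Qed.

Definition Lmat n (n0 : 0 < n) : 'M['I_n]_n :=
  \matrix_(i, j) Ordinal (ltn_pmod (g n i + g n j) n0).

Lemma Lmat_latin n (n0 : 0 < n) : latin_square (@Lmat n n0).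
Proof.
split.
  move=> i j1 j2; rewrite !mxE => /(congr1 val) /= E.
  apply: val_inj; apply: (@g_inj n); [exact: ltn_ord|exact: ltn_ord|].
  exact: (@modn_inj n (g n i) _ _) (@g_lt _ _ (ltn_ord i)) (@g_lt _ _ (ltn_ord j1)) (@g_lt _ _ (ltn_ord j2)) E.
move=> j i1 i2; rewrite !mxE => /(congr1 val) /= E.
apply: val_inj; apply: (@g_inj n); [exact: ltn_ord|exact: ltn_ord|].
rewrite ![_ + g n j]addnC in E.
exact: (@modn_inj n (g n j) _ _) (@g_lt _ _ (ltn_ord j)) (@g_lt _ _ (ltn_ord i1)) (@g_lt _ _ (ltn_ord i2)) E.
Qed.

Lemma Lmat_inner n (n0 : 0 < n) : 2 < n -> has_inner_distance (@Lmat n n0) (n.-1)./2.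
Proof.
move=> n2; split.
  move=> i j i' j'; rewrite /adjacent sdistE !mxE /=.
  case/orP => /andP [/eqP E /orP [/eqP F|/eqP F]]; subst.
  - rewrite shiftl ?g_lt // -F; apply: g_step; rewrite F //.
  - rewrite shiftl ?g_lt // cdC -F; apply: g_step; rewrite F //.
  - rewrite shiftr ?g_lt // -F; apply: g_step; rewrite F //.
  - rewrite shiftr ?g_lt // cdC -F; apply: g_step; rewrite F //.
have h1 : 1 < n by lia.
exists (Ordinal n0), (Ordinal h1), (Ordinal n0), (Ordinal n2); split.
  by [].
rewrite sdistE !mxE /= shiftl ?g_lt //; exact: g_12.
Qed.

Theorem mainTheorem7 (n : nat) :
  (forall k : nat, 1 <= k <= (n.-1)./2 ->
     exists L : 'M['I_n]_n, latin_square L /\ has_inner_distance L k) /\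
  (forall (L : 'M['I_n]_n) (k : nat), latin_square L -> has_inner_distance L k ->
     forall j : nat, 1 <= j < k ->
       exists s : {perm 'I_n},
         latin_square (sym_perm s L) /\ isotopic L (sym_perm s L) /\
         has_inner_distance (sym_perm s L) j).
Proof.
split; last exact: part2.
move=> k Hk.
have n0 : 0 < n by lia.
have n2 : 2 < n by lia.
have HL := @Lmat_latin n n0; have Hi := @Lmat_inner n n0 n2.
case: (k =P (n.-1)./2) => E.
  by exists (@Lmat n n0); rewrite E.
have [s [Hs [_ Hs2]]] := @part2 _ _ _ HL Hi k ltac:(lia).
by exists (sym_perm s (@Lmat n n0)).
Qed.
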